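(* Let $\mathcal{G}\subseteq C(\mathbb{R},\mathbb{R})$ be nonempty. The following conditions are equivalent: (1) $\mathcal{K}_\mathcal{G}\subseteq\{\mathrm{CL}(\mathbb{R})\cap\mathcal{P}(X):X\subseteq\mathbb{R}\}$; (2) $\mathcal{G}$ is a complete and connected family.
   Context: Functions are identified with their graphs, so $\bigcup\mathcal{G}\subseteq\mathbb{R}^2$ is the union of graphs. $\mathrm{CL}(\mathbb{R})$ is the family of closed subsets of $\mathbb{R}$ and $\mathcal{P}(X)$ the power set of $X$. A family $\mathcal{G}\subseteq C(\mathbb{R},\mathbb{R})$ is complete if $g\in\mathcal{G}$ for every $g\in C(\mathbb{R},\mathbb{R})$ whose graph is contained in $\bigcup\mathcal{G}$; it is connected if for any $f,g\in\mathcal{G}$ and $x\neq y$ there is $h\in\mathcal{G}$ with $h(x)=f(x)$ and $h(y)=g(y)$. For $\mathcal{G}\subseteq C(\mathbb{R},\mathbb{R})$ let $R_\mathcal{G}=\{(f,E)\in C(\mathbb{R},\mathbb{R})\times\mathrm{CL}(\mathbb{R}):(\exists g\in\mathcal{G})\, f\restriction E=g\restriction E\}$; for $\mathcal{F}\subseteq C(\mathbb{R},\mathbb{R})$ put $E_\mathcal{G}(\mathcal{F})=\{E\in\mathrm{CL}(\mathbb{R}):(\forall f\in\mathcal{F})\,(f,E)\in R_\mathcal{G}\}$, and let $\mathcal{K}_\mathcal{G}=\{E_\mathcal{G}(\mathcal{F}):\mathcal{F}\subseteq C(\mathbb{R},\mathbb{R})\}$. *)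

(* Defs.v *)
From Stdlib Require Import Reals Rtopology.
Open Scope R_scope.

Definition Cont (f : R -> R) : Prop := continuity f.

Definition CL (E : R -> Prop) : Prop := closed_set E.

Definition graph_union (G : (R -> R) -> Prop) (p : R * R) : Prop :=
  exists g, G g /\ g (fst p) = snd p.

Definition cont_family (G : (R -> R) -> Prop) : Prop := forall g, G g -> Cont g.

Definition complete (G : (R -> R) -> Prop) : Prop :=
  forall g, Cont g -> (forall x, graph_union G (x, g x)) -> G g.

Definition connected_family (G : (R -> R) -> Prop) : Prop :=
  forall f g x y, G f -> G g -> x <> y ->
    exists h, G h /\ h x = f x /\ h y = g y.

Definition RG (G : (R -> R) -> Prop) (f : R -> R) (E : R -> Prop) : Prop :=
  Cont f /\ CL E /\ exists g, G g /\ forall x, E x -> f x = g x.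

Definition EG (G F : (R -> R) -> Prop) (E : R -> Prop) : Prop :=
  CL E /\ forall f, F f -> RG G f E.

Definition KG_sub_closed_powersets (G : (R -> R) -> Prop) : Prop :=
  forall F : (R -> R) -> Prop, (forall f, F f -> Cont f) ->
    exists X : R -> Prop,
      forall E, EG G F E <-> (CL E /\ forall x, E x -> X x).

(* Main.v *)
Require Import Defs.
From Stdlib Require Import Reals Rtopology Lra Classical ClassicalEpsilon FunctionalExtensionality.
Open Scope R_scope.

Lemma cont_pt_elim h x : continuity_pt h x ->
  forall eps, 0 < eps -> exists d, 0 < d /\ forall y, Rabs (y - x) < d -> Rabs (h y - h x) < eps.
Proof.
  intros H eps He. destruct (H eps He) as [d [Hd Hy]]. exists d; split; [lra|].
  intros y Hyx. destruct (Req_dec y x) as [->|Hne].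
  - unfold Rminus; rewrite Rplus_opp_r, Rabs_R0; lra.
  - apply (Hy y). split; [split; [exact I| congruence] | exact Hyx].
Qed.

Lemma cont_pt_intro h x :
  (forall eps, 0 < eps -> exists d, 0 < d /\ forall y, Rabs (y - x) < d -> Rabs (h y - h x) < eps) ->
  continuity_pt h x.
Proof.
  intros H eps He. destruct (H eps He) as [d [Hd Hy]]. exists d; split; [lra|].
  intros y [_ Hyx]. apply Hy. exact Hyx.
Qed.

Lemma cont_local g phi x r : 0 < r -> (forall y, Rabs (y - x) < r -> g y = phi y) ->
  continuity_pt phi x -> continuity_pt g x.
Proof.
  intros Hr Heq Hc. apply cont_pt_intro. intros eps He.
  destruct (cont_pt_elim _ _ Hc eps He) as [d [Hd Hy]].
  exists (Rmin d r). split. { apply Rmin_pos; lra. }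
  intros y Hyx. rewrite (Heq y), (Heq x).
  - apply Hy. pose proof (Rmin_l d r); lra.
  - unfold Rminus; rewrite Rplus_opp_r, Rabs_R0; lra.
  - pose proof (Rmin_r d r); lra.
Qed.

Lemma max_close a b c d e : Rabs (a - c) < e -> Rabs (b - d) < e -> Rabs (Rmax a b - Rmax c d) < e.
Proof.
  intros H1 H2. apply Rabs_def2 in H1. apply Rabs_def2 in H2. apply Rabs_def1;
  unfold Rmax; repeat destruct Rle_dec; lra.
Qed.
Lemma min_close a b c d e : Rabs (a - c) < e -> Rabs (b - d) < e -> Rabs (Rmin a b - Rmin c d) < e.
Proof.
  intros H1 H2. apply Rabs_def2 in H1. apply Rabs_def2 in H2. apply Rabs_def1;
  unfold Rmin; repeat destruct Rle_dec; lra.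
Qed.

Lemma cont_max p q : continuity p -> continuity q -> continuity (fun z => Rmax (p z) (q z)).
Proof.
  intros Hp Hq x. apply cont_pt_intro. intros eps He.
  destruct (cont_pt_elim _ _ (Hp x) eps He) as [d1 [Hd1 H1]].
  destruct (cont_pt_elim _ _ (Hq x) eps He) as [d2 [Hd2 H2]].
  exists (Rmin d1 d2). split. { apply Rmin_pos; lra. }
  intros y Hy. pose proof (Rmin_l d1 d2); pose proof (Rmin_r d1 d2).
  apply max_close; [apply H1|apply H2]; lra.
Qed.
Lemma cont_min p q : continuity p -> continuity q -> continuity (fun z => Rmin (p z) (q z)).
Proof.
  intros Hp Hq x. apply cont_pt_intro. intros eps He.
  destruct (cont_pt_elim _ _ (Hp x) eps He) as [d1 [Hd1 H1]].
  destruct (cont_pt_elim _ _ (Hq x) eps He) as [d2 [Hd2 H2]].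
  exists (Rmin d1 d2). split. { apply Rmin_pos; lra. }
  intros y Hy. pose proof (Rmin_l d1 d2); pose proof (Rmin_r d1 d2).
  apply min_close; [apply H1|apply H2]; lra.
Qed.

Definition glue (p q : R -> R) (s : R) (z : R) : R := if Rle_dec z s then p z else q z.

Lemma cont_glue p q s : continuity p -> continuity q -> p s = q s -> continuity (glue p q s).
Proof.
  intros Hp Hq Hs x. destruct (Rtotal_order x s) as [Hlt|[Heq|Hgt]].
  - apply (cont_local _ p x (s - x)); [lra| |apply Hp].
    intros y Hy. apply Rabs_def2 in Hy. unfold glue. destruct Rle_dec; [reflexivity|lra].
  - subst x. apply cont_pt_intro. intros eps He.
    destruct (cont_pt_elim _ _ (Hp s) eps He) as [d1 [Hd1 H1]].
    destruct (cont_pt_elim _ _ (Hq s) eps He) as [d2 [Hd2 H2]].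
    exists (Rmin d1 d2). split. { apply Rmin_pos; lra. }
    intros y Hy. pose proof (Rmin_l d1 d2); pose proof (Rmin_r d1 d2).
    unfold glue. destruct (Rle_dec s s) as [_|]; [|lra].
    destruct Rle_dec. { apply H1; lra. } rewrite Hs. apply H2; lra.
  - apply (cont_local _ q x (x - s)); [lra| |apply Hq].
    intros y Hy. apply Rabs_def2 in Hy. unfold glue. destruct Rle_dec; [lra|reflexivity].
Qed.

Definition med (a b c : R) := Rmax (Rmin a b) (Rmin (Rmax a b) c).

Lemma med_cases a b c : med a b c = a \/ med a b c = b \/ med a b c = c.
Proof. unfold med, Rmax, Rmin; repeat destruct Rle_dec; auto. Qed.
Lemma med_bounds a b c : Rmin a b <= med a b c <= Rmax a b.
Proof. unfold med, Rmax, Rmin; repeat destruct Rle_dec; lra. Qed.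
Lemma med_l a b : med a b a = a.
Proof. unfold med, Rmax, Rmin; repeat destruct Rle_dec; lra. Qed.
Lemma med_r a b : med a b b = b.
Proof. unfold med, Rmax, Rmin; repeat destruct Rle_dec; lra. Qed.

Section Main.
Variable G : (R -> R) -> Prop.
Hypothesis HG : cont_family G.
Hypothesis Hcomp : complete G.
Hypothesis Hconn : connected_family G.

Lemma W_G phi : continuity phi -> (forall x, exists h, G h /\ h x = phi x) -> G phi.
Proof. intros Hc Hv. apply Hcomp; [exact Hc|]. intros x. exact (Hv x). Qed.

Lemma switch p q s t : G p -> G q -> s < t -> exists h, G h /\
  (forall z, z <= s -> h z = p z) /\ (forall z, t <= z -> h z = q z) /\
  (forall z, Rmin (p z) (q z) <= h z <= Rmax (p z) (q z)).
Proof.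
  intros Gp Gq Hst.
  destruct (Hconn p q s t Gp Gq) as [h0 [Gh0 [E1 E2]]]; [lra|].
  set (c := fun z => med (p z) (q z) (h0 z)).
  exists (glue p (glue c q t) s).
  assert (Hc : continuity c).
  { pose proof (HG p Gp) as Cp; pose proof (HG q Gq) as Cq; pose proof (HG h0 Gh0) as Ch.
    unfold c, med.
    apply (cont_max (fun z => Rmin (p z) (q z)) (fun z => Rmin (Rmax (p z) (q z)) (h0 z))).
    - apply cont_min; auto.
    - apply (cont_min (fun z => Rmax (p z) (q z)) h0); auto. apply cont_max; auto. }
  assert (Hct : c t = q t) by (unfold c; rewrite E2; apply med_r).
  assert (Hcs : c s = p s) by (unfold c; rewrite E1; apply med_l).
  split; [|split; [|split]].
  - apply W_G.
    + apply cont_glue; [apply HG; auto| |]. { apply cont_glue; auto. apply HG; auto. }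
      unfold glue. destruct Rle_dec; [|lra]. auto.
    + intros x. unfold glue. destruct Rle_dec. { exists p; auto. }
      destruct Rle_dec. 2:{ exists q; auto. }
      unfold c. destruct (med_cases (p x) (q x) (h0 x)) as [H|[H|H]]; rewrite H.
      * exists p; auto. * exists q; auto. * exists h0; auto.
  - intros z Hz. unfold glue. destruct Rle_dec; [reflexivity|lra].
  - intros z Hz. unfold glue. destruct Rle_dec; [lra|]. destruct Rle_dec; [|reflexivity].
    assert (z = t) by lra. subst z. exact Hct.
  - intros z. unfold glue. destruct Rle_dec.
    + unfold Rmin, Rmax; repeat destruct Rle_dec; lra.
    + destruct Rle_dec. { apply med_bounds. }
      unfold Rmin, Rmax; repeat destruct Rle_dec; lra.
Qed.

End Main.

Lemma abs_lt_iff x a : Rabs x < a -> -a < x < a.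
Proof. intros H. apply Rabs_def2 in H. lra. Qed.
Lemma abs_le_of x a : -a <= x <= a -> Rabs x <= a.
Proof. intros H. apply Rabs_le. lra. Qed.

Section Main3.
Variable G : (R -> R) -> Prop.
Hypothesis HG : cont_family G.
Hypothesis Hcomp : complete G.
Hypothesis Hconn : connected_family G.
Variable f : R -> R.
Hypothesis Hf : continuity f.
Variable E : R -> Prop.
Hypothesis HE : forall x, E x -> exists h, G h /\ h x = f x.

Definition good a b phi c := G phi /\ phi a = f a /\ phi b = f b /\
  forall z, a <= z <= b -> Rabs (phi z - f a) <= c.

Lemma local_good e : E e -> forall eps, 0 < eps -> exists d, 0 < d /\
  forall a b, E a -> E b -> a < b -> Rabs (a - e) < d -> Rabs (b - e) < d ->
  exists phi, good a b phi (3 * eps).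
Proof.
  intros Ee eps Heps.
  destruct (HE e Ee) as [ge [Gge Ege]].
  destruct (cont_pt_elim _ _ (HG ge Gge e) eps Heps) as [d1 [Hd1 H1]].
  destruct (cont_pt_elim _ _ (Hf e) eps Heps) as [d2 [Hd2 H2]].
  exists (Rmin d1 d2). split. { apply Rmin_pos; lra. }
  pose proof (Rmin_l d1 d2); pose proof (Rmin_r d1 d2).
  intros a b Ea Eb Hab Ha Hb.
  destruct (HE a Ea) as [ga [Gga Ega]].
  destruct (HE b Eb) as [gb [Ggb Egb]].
  destruct (cont_pt_elim _ _ (HG ga Gga a) eps Heps) as [ra [Hra Ha']].
  destruct (cont_pt_elim _ _ (HG gb Ggb b) eps Heps) as [rb [Hrb Hb']].
  set (s := a + Rmin ra (b - a) / 3). set (t := b - Rmin rb (b - a) / 3).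
  pose proof (Rmin_l ra (b - a)); pose proof (Rmin_r ra (b - a)).
  pose proof (Rmin_l rb (b - a)); pose proof (Rmin_r rb (b - a)).
  assert (0 < Rmin ra (b - a)) by (apply Rmin_pos; lra).
  assert (0 < Rmin rb (b - a)) by (apply Rmin_pos; lra).
  assert (Has : a < s) by (unfold s; lra).
  assert (Hst : s < t) by (unfold s, t; lra).
  assert (Htb : t < b) by (unfold t; lra).
  destruct (switch G HG Hcomp Hconn ga ge a s Gga Gge Has) as [p1 [Gp1 [P1a [P1b P1c]]]].
  destruct (switch G HG Hcomp Hconn p1 gb t b Gp1 Ggb Htb) as [p [Gp [Pa [Pb Pc]]]].
  exists p. split; [exact Gp|]. split; [|split].
  - rewrite Pa by lra. rewrite P1a by lra. exact Ega.
  - rewrite Pb by lra. exact Egb.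
  - intros z Hz.
    apply abs_lt_iff in Ha. apply abs_lt_iff in Hb.
    assert (Hze : Rabs (z - e) < d1) by (apply Rabs_def1; lra).
    pose proof (abs_lt_iff _ _ (H1 z Hze)) as Q1. rewrite Ege in Q1.
    assert (Hae : Rabs (a - e) < d2) by (apply Rabs_def1; lra).
    pose proof (abs_lt_iff _ _ (H2 a Hae)) as Q2.
    assert (Hbe : Rabs (b - e) < d2) by (apply Rabs_def1; lra).
    pose proof (abs_lt_iff _ _ (H2 b Hbe)) as Q3.
    apply abs_le_of.
    destruct (Rle_dec z t) as [Hzt|Hzt].
    + rewrite Pa by exact Hzt.
      destruct (Rle_dec z s) as [Hzs|Hzs].
      * assert (Hza : Rabs (z - a) < ra) by (apply Rabs_def1; unfold s in Hzs; lra).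
        pose proof (abs_lt_iff _ _ (Ha' z Hza)) as Q4. rewrite Ega in Q4.
        pose proof (P1c z) as B. revert B. unfold Rmin, Rmax; repeat destruct Rle_dec; lra.
      * rewrite P1b by lra. lra.
    + assert (Hzb : Rabs (z - b) < rb) by (apply Rabs_def1; unfold t in Hzt; lra).
      pose proof (abs_lt_iff _ _ (Hb' z Hzb)) as Q4. rewrite Egb in Q4.
      pose proof (Pc z) as B. rewrite P1b in B by lra. revert B.
      unfold Rmin, Rmax; repeat destruct Rle_dec; lra.
Qed.

End Main3.

Lemma near_opt (P : R -> Prop) d : 0 < d -> (forall c, P c -> 0 <= c) -> (exists c, P c) ->
  exists c, P c /\ forall c', P c' -> c <= c' + d.
Proof.
  intros Hd Hpos [c0 Hc0].
  apply NNPP; intros Hno.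
  assert (Hstep : forall c, P c -> exists c', P c' /\ c' + d < c).
  { intros c Hc. apply NNPP; intros H2. apply Hno. exists c. split; [exact Hc|].
    intros c' Hc'. destruct (Rle_dec c (c' + d)) as [|Hn]; [assumption|].
    exfalso. apply H2. exists c'. split; [exact Hc'|lra]. }
  assert (Hind : forall n, exists c, P c /\ c <= c0 - INR n * d).
  { induction n as [|n IH].
    - exists c0. split; [exact Hc0|]. simpl. lra.
    - destruct IH as [c [Hc Hle]]. destruct (Hstep c Hc) as [c' [Hc' Hlt]].
      exists c'. split; [exact Hc'|]. rewrite S_INR. lra. }
  destruct (INR_archimed d c0 Hd) as [n Hn].
  destruct (Hind n) as [c [Hc Hle]]. pose proof (Hpos c Hc). lra.
Qed.

Section Gaps.
Variable E : R -> Prop.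
Hypothesis HEc : closed_set E.

Lemma closed_nbhd x : ~ E x -> exists r, 0 < r /\ forall y, Rabs (y - x) < r -> ~ E y.
Proof.
  intros Hx. destruct (HEc x Hx) as [r Hr]. exists r. split; [apply cond_pos|].
  intros y Hy. apply (Hr y). exact Hy.
Qed.

Definition LE x a := E a /\ a < x /\ forall z, a < z -> z <= x -> ~ E z.
Definition RE x b := E b /\ x < b /\ forall z, x <= z -> z < b -> ~ E z.

Lemma gap_left x : ~ E x -> (exists z, E z /\ z < x) -> exists a, LE x a.
Proof.
  intros Hx [z0 [Ez0 Hz0]].
  set (S := fun z => E z /\ z < x).
  assert (Hb : bound S). { exists x. intros z [_ Hz]. lra. }
  destruct (completeness S Hb (ex_intro _ z0 (conj Ez0 Hz0))) as [a [Hub Hlub]].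
  assert (Hax : a <= x). { apply Hlub. intros z [_ Hz]. lra. }
  assert (Ea : E a).
  { apply NNPP; intros Hna. destruct (closed_nbhd a Hna) as [r [Hr Hnr]].
    destruct (classic (exists z, S z /\ a - r < z)) as [[z [Sz Hz]]|Hno].
    - pose proof (Hub z Sz). apply (Hnr z); [apply Rabs_def1; lra| exact (proj1 Sz)].
    - assert (a <= a - r); [|lra]. apply Hlub. intros z Sz.
      destruct (Rle_dec z (a - r)); [assumption|]. exfalso; apply Hno. exists z; split; [exact Sz|lra]. }
  exists a. split; [exact Ea|]. split.
  - destruct (Req_dec a x) as [->|]; [contradiction|lra].
  - intros z Haz Hzx Ez. destruct (Req_dec z x) as [->|Hne]; [contradiction|].
    assert (z <= a) by (apply Hub; split; [exact Ez|lra]). lra.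
Qed.

Lemma gap_right x : ~ E x -> (exists z, E z /\ x < z) -> exists b, RE x b.
Proof.
  intros Hx [z0 [Ez0 Hz0]].
  set (S := fun z => E (- z) /\ x < - z).
  assert (Hb : bound S). { exists (- x). intros z [_ Hz]. lra. }
  assert (S0 : S (- z0)). { unfold S. rewrite Ropp_involutive. auto. }
  destruct (completeness S Hb (ex_intro _ _ S0)) as [m [Hub Hlub]].
  assert (Hax : m <= - x). { apply Hlub. intros z [_ Hz]. lra. }
  assert (Ea : E (- m)).
  { apply NNPP; intros Hna. destruct (closed_nbhd (- m) Hna) as [r [Hr Hnr]].
    destruct (classic (exists z, S z /\ m - r < z)) as [[z [Sz Hz]]|Hno].
    - pose proof (Hub z Sz). apply (Hnr (- z)); [apply Rabs_def1; lra| exact (proj1 Sz)].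
    - assert (m <= m - r); [|lra]. apply Hlub. intros z Sz.
      destruct (Rle_dec z (m - r)); [assumption|]. exfalso; apply Hno. exists z; split; [exact Sz|lra]. }
  exists (- m). split; [exact Ea|]. split.
  - destruct (Req_dec (- m) x) as [Heq|]; [rewrite Heq in Ea; contradiction|lra].
  - intros z Hxz Hzb Ez. destruct (Req_dec z x) as [->|Hne]; [contradiction|].
    assert (- z <= m) by (apply Hub; split; [rewrite Ropp_involutive; exact Ez|lra]). lra.
Qed.

Lemma LE_uniq x a a' : LE x a -> LE x a' -> a = a'.
Proof.
  intros [Ea [Hax Ha]] [Ea' [Hax' Ha']].
  destruct (Rtotal_order a a') as [Hlt|[Heq|Hgt]]; [|exact Heq|].
  - exfalso. apply (Ha a'); auto; lra.
  - exfalso. apply (Ha' a); auto; lra.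
Qed.

Lemma RE_uniq x b b' : RE x b -> RE x b' -> b = b'.
Proof.
  intros [Eb [Hxb Hb]] [Eb' [Hxb' Hb']].
  destruct (Rtotal_order b b') as [Hlt|[Heq|Hgt]]; [|exact Heq|].
  - exfalso. apply (Hb' b); auto; lra.
  - exfalso. apply (Hb b'); auto; lra.
Qed.

End Gaps.

Section Main5.
Variable G : (R -> R) -> Prop.
Hypothesis HG : cont_family G.
Hypothesis Hcomp : complete G.
Hypothesis Hconn : connected_family G.
Variable f : R -> R.
Hypothesis Hf : continuity f.
Variable E : R -> Prop.
Hypothesis HEc : closed_set E.
Hypothesis HE : forall x, E x -> exists h, G h /\ h x = f x.
Variable g0 : R -> R.
Hypothesis Hg0 : G g0.

Definition optP a b phi := exists c, good G f a b phi c /\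
  forall psi c', good G f a b psi c' -> c <= c' + (b - a).
Definition phi a b := epsilon (inhabits g0) (optP a b).
Definition gl a := epsilon (inhabits g0) (fun h => G h /\ h a = f a).
Definition lft x := epsilon (inhabits 0) (LE E x).
Definition rgt x := epsilon (inhabits 0) (RE E x).

Definition gg x : R :=
  if excluded_middle_informative (E x) then f x else
  if excluded_middle_informative (exists a, LE E x a) then
    if excluded_middle_informative (exists b, RE E x b) then phi (lft x) (rgt x) x
    else gl (lft x) x
  else if excluded_middle_informative (exists b, RE E x b) then gl (rgt x) x
  else g0 x.

Lemma cont_abs_shift h c : continuity h -> continuity (fun z => Rabs (h z - c)).
Proof.
  intros Hh x. apply cont_pt_intro. intros eps He.
  destruct (cont_pt_elim _ _ (Hh x) eps He) as [d [Hd Hy]]. exists d; split; [exact Hd|].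
  intros y Hyx. eapply Rle_lt_trans; [apply Rabs_triang_inv2|].
  replace (h y - c - (h x - c)) with (h y - h x) by ring. apply Hy; exact Hyx.
Qed.

Lemma phi_spec a b : E a -> E b -> a < b -> optP a b (phi a b).
Proof.
  intros Ea Eb Hab. unfold phi. apply epsilon_spec.
  destruct (near_opt (fun c => exists psi, good G f a b psi c) (b - a)) as [c [[psi Hpsi] Hc]].
  - lra.
  - intros c [psi [_ [_ [_ Hb]]]]. specialize (Hb a). 
    eapply Rle_trans; [apply Rabs_pos| apply Hb; lra].
  - destruct (HE a Ea) as [ga [Gga Ega]]. destruct (HE b Eb) as [gb [Ggb Egb]].
    destruct (Hconn ga gb a b Gga Ggb) as [h [Gh [Ha Hb]]]; [lra|].
    destruct (continuity_ab_maj (fun z => Rabs (h z - f a)) a b) as [M [HM _]]; [lra| |].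
    { intros c _. apply cont_abs_shift. apply HG; exact Gh. }
    exists (Rabs (h M - f a)), h. split; [exact Gh|]. split; [congruence|]. split; [congruence|].
    intros z Hz. apply HM. exact Hz.
  - exists psi. exists c. split; [exact Hpsi|]. intros psi' c' H'. apply Hc. exists psi'. exact H'.
Qed.

Lemma phi_G a b : E a -> E b -> a < b -> G (phi a b) /\ phi a b a = f a /\ phi a b b = f b.
Proof.
  intros Ea Eb Hab. destruct (phi_spec a b Ea Eb Hab) as [c [[G1 [H1 [H2 _]]] _]]. auto.
Qed.

Lemma gl_spec a : E a -> G (gl a) /\ gl a a = f a.
Proof. intros Ea. unfold gl. apply epsilon_spec. apply HE; exact Ea. Qed.

Lemma lft_spec x a : LE E x a -> lft x = a.
Proof. intros H. apply (LE_uniq E x); [|exact H]. unfold lft. apply epsilon_spec. exists a; exact H. Qed.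
Lemma rgt_spec x b : RE E x b -> rgt x = b.
Proof. intros H. apply (RE_uniq E x); [|exact H]. unfold rgt. apply epsilon_spec. exists b; exact H. Qed.

Lemma gg_E x : E x -> gg x = f x.
Proof. intros Ex. unfold gg. destruct excluded_middle_informative; [reflexivity|contradiction]. Qed.

Lemma gg_gap x a b : ~ E x -> LE E x a -> RE E x b -> gg x = phi a b x.
Proof.
  intros Hx Ha Hb. unfold gg.
  destruct excluded_middle_informative; [contradiction|].
  destruct excluded_middle_informative as [_|nn]; [|exfalso; apply nn; exists a; exact Ha].
  destruct excluded_middle_informative as [_|nn]; [|exfalso; apply nn; exists b; exact Hb].
  rewrite (lft_spec x a Ha), (rgt_spec x b Hb). reflexivity.
Qed.

Lemma gg_gapL x a : ~ E x -> LE E x a -> ~ (exists b, RE E x b) -> gg x = gl a x.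
Proof.
  intros Hx Ha Hb. unfold gg.
  destruct excluded_middle_informative; [contradiction|].
  destruct excluded_middle_informative as [_|nn]; [|exfalso; apply nn; exists a; exact Ha].
  destruct excluded_middle_informative as [|_]; [contradiction|].
  rewrite (lft_spec x a Ha). reflexivity.
Qed.

Lemma gg_gapR x b : ~ E x -> ~ (exists a, LE E x a) -> RE E x b -> gg x = gl b x.
Proof.
  intros Hx Ha Hb. unfold gg.
  destruct excluded_middle_informative; [contradiction|].
  destruct excluded_middle_informative as [|_]; [contradiction|].
  destruct excluded_middle_informative as [_|nn]; [|exfalso; apply nn; exists b; exact Hb].
  rewrite (rgt_spec x b Hb). reflexivity.
Qed.

Lemma gg_none x : ~ E x -> ~ (exists a, LE E x a) -> ~ (exists b, RE E x b) -> gg x = g0 x.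
Proof.
  intros Hx Ha Hb. unfold gg.
  destruct excluded_middle_informative; [contradiction|].
  destruct excluded_middle_informative as [|_]; [contradiction|].
  destruct excluded_middle_informative as [|_]; [contradiction|]. reflexivity.
Qed.

Lemma gg_V x : exists h, G h /\ h x = gg x.
Proof.
  destruct (classic (E x)) as [Ex|Hx].
  - rewrite gg_E by exact Ex. apply HE; exact Ex.
  - destruct (classic (exists a, LE E x a)) as [[a Ha]|Hna];
    destruct (classic (exists b, RE E x b)) as [[b Hb]|Hnb].
    + rewrite (gg_gap x a b Hx Ha Hb). exists (phi a b). split; [|reflexivity].
      destruct Ha as [Ea [Hax _]]. destruct Hb as [Eb [Hxb _]].
      apply phi_G; auto; lra.
    + rewrite (gg_gapL x a Hx Ha Hnb). exists (gl a). split; [|reflexivity].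
      apply gl_spec. apply Ha.
    + rewrite (gg_gapR x b Hx Hna Hb). exists (gl b). split; [|reflexivity].
      apply gl_spec. apply Hb.
    + rewrite (gg_none x Hx Hna Hnb). exists g0. auto.
Qed.

Lemma LE_shift c r x y a : (forall w, Rabs (w - c) < r -> ~ E w) ->
  Rabs (x - c) < r -> Rabs (y - c) < r -> LE E x a -> LE E y a.
Proof.
  intros Hd Hx Hy [Ea [Hax Ha]].
  apply abs_lt_iff in Hx. apply abs_lt_iff in Hy.
  assert (Hac : a <= c - r).
  { destruct (Rle_dec a (c - r)) as [|n]; [assumption|]. exfalso.
    apply (Hd a); [apply Rabs_def1; lra|exact Ea]. }
  split; [exact Ea|]. split; [lra|].
  intros z Haz Hzy. destruct (Rle_dec z x) as [Hzx|Hzx]; [apply Ha; lra|].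
  apply Hd. apply Rabs_def1; lra.
Qed.

Lemma RE_shift c r x y b : (forall w, Rabs (w - c) < r -> ~ E w) ->
  Rabs (x - c) < r -> Rabs (y - c) < r -> RE E x b -> RE E y b.
Proof.
  intros Hd Hx Hy [Eb [Hxb Hb]].
  apply abs_lt_iff in Hx. apply abs_lt_iff in Hy.
  assert (Hbc : c + r <= b).
  { destruct (Rle_dec (c + r) b) as [|n]; [assumption|]. exfalso.
    apply (Hd b); [apply Rabs_def1; lra|exact Eb]. }
  split; [exact Eb|]. split; [lra|].
  intros z Hyz Hzb. destruct (Rle_dec x z) as [Hzx|Hzx]; [apply Hb; lra|].
  apply Hd. apply Rabs_def1; lra.
Qed.

Lemma gg_cont_out x : ~ E x -> continuity_pt gg x.
Proof.
  intros Hx. destruct (closed_nbhd E HEc x Hx) as [r [Hr Hd]].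
  assert (Hxx : Rabs (x - x) < r) by (unfold Rminus; rewrite Rplus_opp_r, Rabs_R0; lra).
  destruct (classic (exists a, LE E x a)) as [[a Ha]|Hna];
  destruct (classic (exists b, RE E x b)) as [[b Hb]|Hnb].
  - apply (cont_local _ (phi a b) x r Hr).
    + intros y Hy. apply gg_gap; [apply Hd; exact Hy| |].
      * exact (LE_shift x r x y a Hd Hxx Hy Ha).
      * exact (RE_shift x r x y b Hd Hxx Hy Hb).
    + destruct Ha as [Ea [Hax _]]. destruct Hb as [Eb [Hxb _]].
      apply HG. apply phi_G; auto; lra.
  - apply (cont_local _ (gl a) x r Hr).
    + intros y Hy. apply gg_gapL; [apply Hd; exact Hy| |].
      * exact (LE_shift x r x y a Hd Hxx Hy Ha).
      * intros [b Hb]. apply Hnb. exists b. exact (RE_shift x r y x b Hd Hy Hxx Hb).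
    + apply HG. apply gl_spec. apply Ha.
  - apply (cont_local _ (gl b) x r Hr).
    + intros y Hy. apply gg_gapR; [apply Hd; exact Hy| |].
      * intros [a Ha]. apply Hna. exists a. exact (LE_shift x r y x a Hd Hy Hxx Ha).
      * exact (RE_shift x r x y b Hd Hxx Hy Hb).
    + apply HG. apply gl_spec. apply Hb.
  - apply (cont_local _ g0 x r Hr).
    + intros y Hy. apply gg_none; [apply Hd; exact Hy| |].
      * intros [a Ha]. apply Hna. exists a. exact (LE_shift x r y x a Hd Hy Hxx Ha).
      * intros [b Hb]. apply Hnb. exists b. exact (RE_shift x r y x b Hd Hy Hxx Hb).
    + apply HG. exact Hg0.
Qed.


Definition RE0 e b := E b /\ e < b /\ forall z, e < z -> z < b -> ~ E z.
Definition LE0 e a := E a /\ a < e /\ forall z, a < z -> z < e -> ~ E z.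

Lemma RE0_uniq e b b' : RE0 e b -> RE0 e b' -> b = b'.
Proof.
  intros [Eb [Hxb Hb]] [Eb' [Hxb' Hb']].
  destruct (Rtotal_order b b') as [Hlt|[Heq|Hgt]]; [|exact Heq|].
  - exfalso. apply (Hb' b); auto; lra.
  - exfalso. apply (Hb b'); auto; lra.
Qed.
Lemma LE0_uniq e a a' : LE0 e a -> LE0 e a' -> a = a'.
Proof.
  intros [Ea [Hax Ha]] [Ea' [Hax' Ha']].
  destruct (Rtotal_order a a') as [Hlt|[Heq|Hgt]]; [|exact Heq|].
  - exfalso. apply (Ha a'); auto; lra.
  - exfalso. apply (Ha' a); auto; lra.
Qed.

Definition adjR e := if excluded_middle_informative (exists b, RE0 e b)
  then phi e (epsilon (inhabits 0) (RE0 e)) else gl e.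
Definition adjL e := if excluded_middle_informative (exists a, LE0 e a)
  then phi (epsilon (inhabits 0) (LE0 e)) e else gl e.

Lemma adjR_spec e : E e -> continuity_pt (adjR e) e /\ adjR e e = f e.
Proof.
  intros Ee. unfold adjR. destruct excluded_middle_informative as [Hb|Hb].
  - pose proof (epsilon_spec (inhabits 0) (RE0 e) Hb) as Hs.
    destruct Hs as [Eb [Heb _]].
    destruct (phi_G e (epsilon (inhabits 0) (RE0 e)) Ee Eb Heb) as [G1 [H1 _]].
    split; [apply HG; exact G1|exact H1].
  - destruct (gl_spec e Ee) as [G1 H1]. split; [apply HG; exact G1|exact H1].
Qed.

Lemma adjL_spec e : E e -> continuity_pt (adjL e) e /\ adjL e e = f e.
Proof.
  intros Ee. unfold adjL. destruct excluded_middle_informative as [Hb|Hb].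
  - pose proof (epsilon_spec (inhabits 0) (LE0 e) Hb) as Hs.
    destruct Hs as [Eb [Heb _]].
    destruct (phi_G (epsilon (inhabits 0) (LE0 e)) e Eb Ee Heb) as [G1 [_ H1]].
    split; [apply HG; exact G1|exact H1].
  - destruct (gl_spec e Ee) as [G1 H1]. split; [apply HG; exact G1|exact H1].
Qed.

Lemma gg_adjR e y : E e -> e < y -> ~ E y -> LE E y e -> gg y = adjR e y.
Proof.
  intros Ee Hey Hy Hle. destruct (classic (exists b, RE E y b)) as [[b Hb]|Hnb].
  - rewrite (gg_gap y e b Hy Hle Hb).
    assert (H0 : RE0 e b).
    { destruct Hle as [_ [_ Hl]]. destruct Hb as [Eb [Hyb Hr]].
      split; [exact Eb|]. split; [lra|]. intros z Hez Hzb.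
      destruct (Rle_dec z y); [apply Hl; lra|apply Hr; lra]. }
    unfold adjR. destruct excluded_middle_informative as [Hx|Hx]; [|exfalso; apply Hx; exists b; exact H0].
    rewrite (RE0_uniq e _ b (epsilon_spec (inhabits 0) (RE0 e) Hx) H0). reflexivity.
  - rewrite (gg_gapL y e Hy Hle Hnb). unfold adjR.
    destruct excluded_middle_informative as [[b Hb]|Hx]; [|reflexivity].
    exfalso. apply Hnb. exists b. destruct Hle as [_ [_ Hl]]. destruct Hb as [Eb [Heb Hr]].
    assert (Hyb : y < b). { destruct (Rlt_dec y b) as [|n]; [assumption|]. exfalso. apply (Hl b); auto; lra. }
    split; [exact Eb|]. split; [exact Hyb|]. intros z Hz1 Hz2. apply Hr; lra.
Qed.

Lemma gg_adjL e y : E e -> y < e -> ~ E y -> RE E y e -> gg y = adjL e y.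
Proof.
  intros Ee Hey Hy Hre. destruct (classic (exists a, LE E y a)) as [[a Ha]|Hna].
  - rewrite (gg_gap y a e Hy Ha Hre).
    assert (H0 : LE0 e a).
    { destruct Hre as [_ [_ Hr]]. destruct Ha as [Ea [Hay Hl]].
      split; [exact Ea|]. split; [lra|]. intros z Haz Hze.
      destruct (Rle_dec z y); [apply Hl; lra|apply Hr; lra]. }
    unfold adjL. destruct excluded_middle_informative as [Hx|Hx]; [|exfalso; apply Hx; exists a; exact H0].
    rewrite (LE0_uniq e _ a (epsilon_spec (inhabits 0) (LE0 e) Hx) H0). reflexivity.
  - rewrite (gg_gapR y e Hy Hna Hre). unfold adjL.
    destruct excluded_middle_informative as [[a Ha]|Hx]; [|reflexivity].
    exfalso. apply Hna. exists a. destruct Hre as [_ [_ Hr]]. destruct Ha as [Ea [Hae Hl]].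
    assert (Hay : a < y). { destruct (Rlt_dec a y) as [|n]; [assumption|]. exfalso. apply (Hr a); auto; lra. }
    split; [exact Ea|]. split; [exact Hay|]. intros z Hz1 Hz2. apply Hl; lra.
Qed.

Lemma near_bound e : E e -> forall eps, 0 < eps -> exists d, 0 < d /\
  forall a b y, LE E y a -> RE E y b -> Rabs (a - e) < d -> Rabs (b - e) < d -> ~ E y ->
  Rabs (gg y - f e) < eps.
Proof.
  intros Ee eps Heps. set (ep := eps / 7).
  assert (Hep : 0 < ep) by (unfold ep; lra).
  destruct (local_good G HG Hcomp Hconn f Hf E HE e Ee ep Hep) as [d0 [Hd0 Hgood]].
  destruct (cont_pt_elim _ _ (Hf e) ep Hep) as [df [Hdf Hfe]].
  exists (Rmin d0 (Rmin df ep)). split. { apply Rmin_pos; [lra|apply Rmin_pos; lra]. }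
  pose proof (Rmin_l d0 (Rmin df ep)); pose proof (Rmin_r d0 (Rmin df ep)).
  pose proof (Rmin_l df ep); pose proof (Rmin_r df ep).
  intros a b y Ha Hb Hae Hbe Hy.
  destruct Ha as [Ea [Hay Hl]]. destruct Hb as [Eb [Hyb Hr]].
  rewrite (gg_gap y a b Hy (conj Ea (conj Hay Hl)) (conj Eb (conj Hyb Hr))).
  destruct (phi_spec a b Ea Eb ltac:(lra)) as [c [[_ [_ [_ Hc]]] Hopt]].
  destruct (Hgood a b Ea Eb ltac:(lra) ltac:(lra) ltac:(lra)) as [psi Hpsi].
  pose proof (Hopt psi _ Hpsi) as Hcb.
  pose proof (Hc y ltac:(lra)) as Hy1.
  pose proof (abs_lt_iff _ _ (Hfe a ltac:(lra))) as Hfa.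
  apply abs_lt_iff in Hae. apply abs_lt_iff in Hbe.
  assert (Hy2 : - c <= phi a b y - f a <= c) by (revert Hy1; unfold Rabs; destruct Rcase_abs; intros; lra).
  apply Rabs_def1; unfold ep in *; lra.
Qed.

Lemma right_bound e : E e -> forall eps, 0 < eps -> exists d, 0 < d /\
  forall y, e < y -> y < e + d -> ~ E y -> Rabs (gg y - f e) < eps.
Proof.
  intros Ee eps Heps.
  destruct (near_bound e Ee eps Heps) as [d1 [Hd1 Hnear]].
  destruct (adjR_spec e Ee) as [Hca Hae].
  destruct (cont_pt_elim _ _ Hca eps Heps) as [da [Hda Hadj]].
  rewrite Hae in Hadj.
  assert (Hleft : forall y, e < y -> ~ E y -> exists a, LE E y a /\ e <= a).
  { intros y Hey Hy. destruct (gap_left E HEc y Hy (ex_intro _ e (conj Ee Hey))) as [a Ha].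
    exists a. split; [exact Ha|]. destruct Ha as [_ [_ Hl]].
    destruct (Rle_dec e a) as [|n]; [assumption|]. exfalso. apply (Hl e); auto; lra. }
  destruct (classic (exists c, E c /\ e < c /\ c < e + d1)) as [[c [Ec [Hec Hcd]]]|Hnc].
  - exists (Rmin (c - e) da). split. { apply Rmin_pos; lra. }
    pose proof (Rmin_l (c - e) da); pose proof (Rmin_r (c - e) da).
    intros y Hey Hyd Hy. destruct (Hleft y Hey Hy) as [a [Ha Hea]].
    destruct (Req_dec a e) as [->|Hne].
    + rewrite (gg_adjR e y Ee Hey Hy Ha). apply Hadj. apply Rabs_def1; lra.
    + assert (Hyc : y < c) by lra.
      destruct (gap_right E HEc y Hy (ex_intro _ c (conj Ec Hyc))) as [b Hb].
      assert (Hbc : b <= c).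
      { destruct Hb as [_ [_ Hr]]. destruct (Rle_dec b c) as [|n]; [assumption|].
        exfalso. apply (Hr c); auto; lra. }
      pose proof (proj1 (proj2 Ha)). pose proof (proj1 (proj2 Hb)).
      apply (Hnear a b y Ha Hb); [apply Rabs_def1; lra|apply Rabs_def1; lra|exact Hy].
  - exists (Rmin d1 da). split. { apply Rmin_pos; lra. }
    pose proof (Rmin_l d1 da); pose proof (Rmin_r d1 da).
    intros y Hey Hyd Hy. destruct (Hleft y Hey Hy) as [a [Ha Hea]].
    destruct (Req_dec a e) as [->|Hne].
    + rewrite (gg_adjR e y Ee Hey Hy Ha). apply Hadj. apply Rabs_def1; lra.
    + exfalso. apply Hnc. exists a. destruct Ha as [Ea [Hay _]]. split; [exact Ea|]. lra.
Qed.

Lemma left_bound e : E e -> forall eps, 0 < eps -> exists d, 0 < d /\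
  forall y, e - d < y -> y < e -> ~ E y -> Rabs (gg y - f e) < eps.
Proof.
  intros Ee eps Heps.
  destruct (near_bound e Ee eps Heps) as [d1 [Hd1 Hnear]].
  destruct (adjL_spec e Ee) as [Hca Hae].
  destruct (cont_pt_elim _ _ Hca eps Heps) as [da [Hda Hadj]].
  rewrite Hae in Hadj.
  assert (Hright : forall y, y < e -> ~ E y -> exists b, RE E y b /\ b <= e).
  { intros y Hey Hy. destruct (gap_right E HEc y Hy (ex_intro _ e (conj Ee Hey))) as [b Hb].
    exists b. split; [exact Hb|]. destruct Hb as [_ [_ Hr]].
    destruct (Rle_dec b e) as [|n]; [assumption|]. exfalso. apply (Hr e); auto; lra. }
  destruct (classic (exists c, E c /\ c < e /\ e - d1 < c)) as [[c [Ec [Hec Hcd]]]|Hnc].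
  - exists (Rmin (e - c) da). split. { apply Rmin_pos; lra. }
    pose proof (Rmin_l (e - c) da); pose proof (Rmin_r (e - c) da).
    intros y Hyd Hey Hy. destruct (Hright y Hey Hy) as [b [Hb Hbe]].
    destruct (Req_dec b e) as [->|Hne].
    + rewrite (gg_adjL e y Ee Hey Hy Hb). apply Hadj. apply Rabs_def1; lra.
    + assert (Hyc : c < y) by lra.
      destruct (gap_left E HEc y Hy (ex_intro _ c (conj Ec Hyc))) as [a Ha].
      assert (Hac : c <= a).
      { destruct Ha as [_ [_ Hl]]. destruct (Rle_dec c a) as [|n]; [assumption|].
        exfalso. apply (Hl c); auto; lra. }
      pose proof (proj1 (proj2 Ha)). pose proof (proj1 (proj2 Hb)).
      apply (Hnear a b y Ha Hb); [apply Rabs_def1; lra|apply Rabs_def1; lra|exact Hy].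
  - exists (Rmin d1 da). split. { apply Rmin_pos; lra. }
    pose proof (Rmin_l d1 da); pose proof (Rmin_r d1 da).
    intros y Hyd Hey Hy. destruct (Hright y Hey Hy) as [b [Hb Hbe]].
    destruct (Req_dec b e) as [->|Hne].
    + rewrite (gg_adjL e y Ee Hey Hy Hb). apply Hadj. apply Rabs_def1; lra.
    + exfalso. apply Hnc. exists b. destruct Hb as [Eb [Hyb _]]. split; [exact Eb|]. lra.
Qed.

Lemma gg_cont_in e : E e -> continuity_pt gg e.
Proof.
  intros Ee. apply cont_pt_intro. intros eps Heps. rewrite (gg_E e Ee).
  destruct (right_bound e Ee eps Heps) as [dr [Hdr Hr]].
  destruct (left_bound e Ee eps Heps) as [dl [Hdl Hl]].
  destruct (cont_pt_elim _ _ (Hf e) eps Heps) as [df [Hdf Hfe]].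
  exists (Rmin dr (Rmin dl df)). split. { apply Rmin_pos; [lra|apply Rmin_pos; lra]. }
  pose proof (Rmin_l dr (Rmin dl df)); pose proof (Rmin_r dr (Rmin dl df)).
  pose proof (Rmin_l dl df); pose proof (Rmin_r dl df).
  intros y Hy. destruct (classic (E y)) as [Ey|Hny].
  - rewrite (gg_E y Ey). apply Hfe. lra.
  - apply abs_lt_iff in Hy. destruct (Rtotal_order y e) as [Hlt|[Heq|Hgt]].
    + apply Hl; [lra|lra|exact Hny].
    + subst y. contradiction.
    + apply Hr; [lra|lra|exact Hny].
Qed.

Lemma ext_exists : exists g, G g /\ forall x, E x -> f x = g x.
Proof.
  exists gg. split.
  - apply (W_G G Hcomp).
    + intros x. destruct (classic (E x)); [apply gg_cont_in|apply gg_cont_out]; assumption.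
    + exact gg_V.
  - intros x Ex. symmetry. apply gg_E. exact Ex.
Qed.

End Main5.

Lemma closed_full : closed_set (fun _ => True).
Proof. intros x Hx. exfalso. apply Hx. exact I. Qed.

Lemma closed_pair c d : closed_set (fun z => z = c \/ z = d).
Proof.
  intros x Hx. unfold complementary in Hx. assert (Hc : x <> c) by tauto. assert (Hd : x <> d) by tauto.
  assert (Hp : 0 < Rmin (Rabs (x - c)) (Rabs (x - d))).
  { apply Rmin_pos; apply Rabs_pos_lt; lra. }
  exists (mkposreal _ Hp). intros y Hy. unfold disc in Hy; simpl in Hy.
  pose proof (Rmin_l (Rabs (x - c)) (Rabs (x - d))); pose proof (Rmin_r (Rabs (x - c)) (Rabs (x - d))).
  intros [->| ->].
  - rewrite <- Rabs_Ropp in Hy. replace (- (c - x)) with (x - c) in Hy by ring. lra.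
  - rewrite <- Rabs_Ropp in Hy. replace (- (d - x)) with (x - d) in Hy by ring. lra.
Qed.

Lemma closed_single c : closed_set (fun z => z = c).
Proof.
  intros x Hx. destruct (closed_pair c c x) as [r Hr]. { intros [H|H]; apply Hx; exact H. }
  exists r. intros y Hy Hyc. apply (Hr y Hy). left. exact Hyc.
Qed.

Theorem theorem4p5 (G : (R -> R) -> Prop) :
  cont_family G -> (exists g, G g) ->
  (KG_sub_closed_powersets G <-> (complete G /\ connected_family G)).
Proof.
  intros HG [g0 Hg0]. split.
  - intros HK. split.
    + intros g Hg Hgu.
      destruct (HK (fun h => h = g)) as [X HX]. { intros h ->. exact Hg. }
      assert (HXall : forall x, X x).
      { intros x. assert (HE1 : EG G (fun h => h = g) (fun z => z = x)).
        2:{ exact (proj2 (proj1 (HX _) HE1) x eq_refl). }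
        split; [apply closed_single|]. intros h ->. split; [exact Hg|]. split; [apply closed_single|].
        destruct (Hgu x) as [g' [Gg' Hg']]. exists g'. split; [exact Gg'|]. intros z Hz. subst z. simpl in Hg'. congruence. }
      destruct (proj2 (HX (fun _ => True)) (conj closed_full (fun x _ => HXall x))) as [_ H].
      destruct (H g eq_refl) as [_ [_ [g' [Gg' Hgg']]]].
      replace g with g'; [exact Gg'|]. apply functional_extensionality. intros x. symmetry. apply Hgg'. exact I.
    + intros f g x y Gf Gg Hxy.
      set (k := fun t => f x + (g y - f x) / (y - x) * (t - x)).
      assert (Hk : continuity k).
      { unfold k. reg. }
      assert (Hkx : k x = f x) by (unfold k; ring).
      assert (Hky : k y = g y) by (unfold k; field; lra).
      destruct (HK (fun h => h = k)) as [X HX]. { intros h ->. exact Hk. }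
      assert (HXx : X x).
      { assert (HE1 : EG G (fun h => h = k) (fun z => z = x)).
        2:{ exact (proj2 (proj1 (HX _) HE1) x eq_refl). }
        split; [apply closed_single|]. intros h ->. split; [exact Hk|]. split; [apply closed_single|].
        exists f. split; [exact Gf|]. intros z ->. exact Hkx. }
      assert (HXy : X y).
      { assert (HE1 : EG G (fun h => h = k) (fun z => z = y)).
        2:{ exact (proj2 (proj1 (HX _) HE1) y eq_refl). }
        split; [apply closed_single|]. intros h ->. split; [exact Hk|]. split; [apply closed_single|].
        exists g. split; [exact Gg|]. intros z ->. exact Hky. }
      destruct (proj2 (HX (fun z => z = x \/ z = y)) (conj (closed_pair x y) (fun z Hz => match Hz with or_introl e => eq_ind_r X HXx e | or_intror e => eq_ind_r X HXy e end))) as [_ H].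
      destruct (H k eq_refl) as [_ [_ [h [Gh Hh]]]].
      exists h. split; [exact Gh|]. split.
      * rewrite <- (Hh x (or_introl eq_refl)). exact Hkx.
      * rewrite <- (Hh y (or_intror eq_refl)). exact Hky.
  - intros [Hc Hk] F HF.
    exists (fun x => forall f, F f -> exists g, G g /\ g x = f x).
    intros E. split.
    + intros [HEc HEf]. split; [exact HEc|]. intros x Ex f Ff.
      destruct (HEf f Ff) as [_ [_ [g [Gg Hg]]]]. exists g. split; [exact Gg|]. symmetry. apply Hg. exact Ex.
    + intros [HEc HX]. split; [exact HEc|]. intros f Ff.
      split; [exact (HF f Ff)|]. split; [exact HEc|].
      exact (ext_exists G HG Hc Hk f (HF f Ff) E HEc (fun x Ex => HX x Ex f Ff) g0 Hg0).
Qed.
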